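(* For every fixed integer $k\ge 1$ there exists a constant $C_k$ such that the following holds: for every integer $d\ge k$ and every polynomial $P(x)=\sum_{n=0}^d a_nx^n$ with real coefficients and $\|P\|_{[-1,1]}\le 1$, the polynomial $P_{\ge k}(x)=\sum_{n=0}^{d-k}a_{n+k}x^n$ satisfies $$\|P_{\ge k}\|_{[-1,1]}\le C_k\, d^{k}\sqrt{d}.$$ (The paper states this as $\|P_{\ge k}\|_{[-1,1]}\le O\big(\tfrac{d^k}{k!}\sqrt{d/k}\big)$, in particular polynomial in $d$.)
   Context: For a function $f$ on $[-1,1]$, $\|f\|_{[-1,1]}:=\max_{x\in[-1,1]}|f(x)|$. The polynomial $P_{\ge k}$ is the ''high-order constituent polynomial'' of $P$, defined by the decomposition $P(x)=\sum_{n=0}^{k-1}a_nx^n+x^kP_{\ge k}(x)$. *)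

(* Defs.v *)
From Stdlib Require Import Reals.
Open Scope R_scope.

(* Polynomial of degree at most d with coefficient sequence a:
   P(x) = sum_{n=0}^{d} a_n x^n  (sum_f_R0 f d has d+1 terms). *)
Definition poly_eval (a : nat -> R) (d : nat) (x : R) : R :=
  sum_f_R0 (fun n => a n * x ^ n) d.

Definition high_part (a : nat -> R) (d k : nat) (x : R) : R :=
  poly_eval (fun n => a (n + k)%nat) (d - k) x.

Definition sup_norm_le (f : R -> R) (M : R) : Prop :=
  forall x, -1 <= x <= 1 -> Rabs (f x) <= M.

(* Main.v *)
Require Import Defs.
From Stdlib Require Import Reals Lra Lia.
Open Scope R_scope.

Lemma sum_zero (f : nat -> R) N : (forall i, (i <= N)%nat -> f i = 0) -> sum_f_R0 f N = 0.
Proof.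
  induction N; intros H; simpl.
  - apply H; lia.
  - rewrite IHN by (intros; apply H; lia). rewrite H by lia. ring.
Qed.

Lemma sum_single (f : nat -> R) j N : (j <= N)%nat ->
  sum_f_R0 (fun m => if Nat.eqb m j then f m else 0) N = f j.
Proof.
  induction N; intros H; cbn [sum_f_R0].
  - assert (j = 0%nat) by lia. subst. reflexivity.
  - destruct (Nat.eq_dec j (S N)) as [->|Hn].
    + rewrite Nat.eqb_refl. rewrite sum_zero; [ring|].
      intros i Hi. destruct (Nat.eqb_spec i (S N)); [lia|reflexivity].
    + rewrite IHN by lia. destruct (Nat.eqb_spec (S N) j); [lia|ring].
Qed.

Lemma sum_ext_zero (f : nat -> R) N : (forall i, (N < i)%nat -> f i = 0) ->
  forall j, sum_f_R0 f (N + j) = sum_f_R0 f N.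
Proof.
  intros H j. induction j.
  - rewrite Nat.add_0_r. reflexivity.
  - rewrite Nat.add_succ_r. simpl. rewrite IHj, H by lia. ring.
Qed.

Lemma sum_ext_zero' (f : nat -> R) N M : (N <= M)%nat -> (forall i, (N < i)%nat -> f i = 0) ->
  sum_f_R0 f M = sum_f_R0 f N.
Proof.
  intros HM H. replace M with (N + (M - N))%nat by lia. apply sum_ext_zero; auto.
Qed.

Lemma sum_swap (f : nat -> nat -> R) n m :
  sum_f_R0 (fun i => sum_f_R0 (fun j => f i j) m) n =
  sum_f_R0 (fun j => sum_f_R0 (fun i => f i j) n) m.
Proof.
  induction n; simpl.
  - reflexivity.
  - rewrite IHn. rewrite <- sum_plus. reflexivity.
Qed.

Lemma pe_S (g : nat -> R) L x :
  poly_eval g (S L) x = g 0%nat + x * poly_eval (fun n => g (S n)) L x.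
Proof.
  unfold poly_eval. induction L.
  - simpl. ring.
  - replace (sum_f_R0 (fun n : nat => g n * x ^ n) (S (S L))) with
      (sum_f_R0 (fun n : nat => g n * x ^ n) (S L) + g (S (S L)) * x ^ (S (S L))) by reflexivity.
    rewrite IHL. simpl. ring.
Qed.

Definition shift (c : nat -> R) (n : nat) : R :=
  match n with 0%nat => 0 | S n' => c n' end.

Fixpoint tc (m : nat) : nat -> R :=
  match m with
  | 0%nat => fun n => if Nat.eqb n 0 then 1 else 0
  | S m' => match m' with
            | 0%nat => fun n => if Nat.eqb n 1 then 1 else 0
            | S m'' => fun n => 2 * shift (tc m') n - tc m'' n
            end
  end.

Lemma tc_SS m n : tc (S (S m)) n = 2 * shift (tc (S m)) n - tc m n.
Proof. reflexivity. Qed.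

Lemma tc_1 n : tc 1 n = shift (tc 0) n.
Proof. destruct n as [|[|n]]; reflexivity. Qed.

Lemma tc_zero_aux m : (forall n, (m < n)%nat -> tc m n = 0) /\ (forall n, (S m < n)%nat -> tc (S m) n = 0).
Proof.
  induction m.
  - split; intros n Hn.
    + simpl. destruct (Nat.eqb_spec n 0); [lia|reflexivity].
    + rewrite tc_1. destruct n; [lia|]. simpl. destruct (Nat.eqb_spec n 0); [lia|reflexivity].
  - destruct IHm as [H1 H2]. split; [exact H2|].
    intros n Hn. rewrite tc_SS. destruct n; [lia|]. simpl shift.
    rewrite H2 by lia. rewrite H1 by lia. ring.
Qed.

Lemma tc_zero m n : (m < n)%nat -> tc m n = 0.
Proof. intros; apply (proj1 (tc_zero_aux m)); auto. Qed.

Lemma tc_bound_aux m : (forall n, Rabs (tc m n) <= INR (S m) ^ n) /\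
                       (forall n, Rabs (tc (S m) n) <= INR (S (S m)) ^ n).
Proof.
  induction m.
  - split; intros n.
    + simpl. destruct (Nat.eqb_spec n 0).
      * subst. simpl. rewrite Rabs_R1. lra.
      * rewrite Rabs_R0. apply pow_le. simpl; lra.
    + rewrite tc_1. destruct n; simpl.
      * rewrite Rabs_R0. lra.
      * destruct (Nat.eqb_spec n 0).
        -- subst. simpl. rewrite Rabs_R1. lra.
        -- rewrite Rabs_R0. apply Rmult_le_pos; [lra|apply pow_le; lra].
  - destruct IHm as [H1 H2]. split; [exact H2|].
    intros n. rewrite tc_SS. destruct n; cbn [shift].
    + specialize (H1 0%nat). simpl in *. rewrite Rmult_0_r, Rminus_0_l, Rabs_Ropp. exact H1.
    + eapply Rle_trans; [apply Rabs_triang|]. rewrite Rabs_Ropp, Rabs_mult.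
      rewrite Rabs_right by lra.
      specialize (H1 (S n)). specialize (H2 n).
      assert (Hm : INR (S (S (S m))) = INR (S m) + 2) by (rewrite !S_INR; ring).
      assert (Hm2 : INR (S (S m)) = INR (S m) + 1) by (rewrite !S_INR; ring).
      rewrite Hm. rewrite Hm2 in H2. set (a := INR (S m)) in *.
      assert (Ha : 1 <= a) by (unfold a; rewrite S_INR; pose proof (pos_INR m); lra).
      assert (P1 : (a+1)^n <= (a+2)^n) by (apply pow_incr; lra).
      assert (P2 : a^n <= (a+2)^n) by (apply pow_incr; lra).
      change (a^(S n)) with (a * a^n) in H1. change ((a+2)^(S n)) with ((a+2)*(a+2)^n).
      assert (0 <= a^n) by (apply pow_le; lra).
      nra.
Qed.

Lemma tc_bound m n : Rabs (tc m n) <= INR (S m) ^ n.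
Proof. apply (proj1 (tc_bound_aux m)). Qed.
Lemma pe_ext (f g : nat -> R) L x : (forall n, f n = g n) -> poly_eval f L x = poly_eval g L x.
Proof. intros H. unfold poly_eval. apply sum_eq. intros. rewrite H. reflexivity. Qed.

Lemma pe_shift c L x : poly_eval (shift c) (S L) x = x * poly_eval c L x.
Proof. rewrite pe_S. simpl shift. ring_simplify. reflexivity. Qed.

Lemma pe_lin (f g : nat -> R) L x :
  poly_eval (fun n => 2 * f n - g n) L x = 2 * poly_eval f L x - poly_eval g L x.
Proof.
  unfold poly_eval. rewrite scal_sum, <- minus_sum. apply sum_eq. intros; ring.
Qed.

Lemma pe_tc_stable m L x : (m <= L)%nat -> poly_eval (tc m) L x = poly_eval (tc m) m x.
Proof.
  intros H. unfold poly_eval. apply sum_ext_zero'; auto.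
  intros i Hi. rewrite tc_zero by lia. ring.
Qed.

Lemma tc_cos_aux t m : (forall L, (m <= L)%nat -> poly_eval (tc m) L (cos t) = cos (INR m * t)) /\
  (forall L, (S m <= L)%nat -> poly_eval (tc (S m)) L (cos t) = cos (INR (S m) * t)).
Proof.
  induction m.
  - split; intros L HL; rewrite pe_tc_stable by auto.
    + unfold poly_eval. simpl. replace (0 * t) with 0 by ring. rewrite cos_0. ring.
    + unfold poly_eval. simpl. replace (1 * t) with t by ring. ring.
  - destruct IHm as [H1 H2]. split; [exact H2|].
    intros L HL. destruct L as [|L]; [lia|].
    rewrite (pe_ext _ (fun n => 2 * shift (tc (S m)) n - tc m n)) by (intros; apply tc_SS).
    rewrite pe_lin, pe_shift, H2, H1 by lia.
    assert (E : INR (S (S m)) * t = INR (S m) * t + t) by (rewrite !S_INR; ring).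
    assert (E2 : INR m * t = INR (S m) * t - t) by (rewrite !S_INR; ring).
    rewrite E, E2, cos_plus, cos_minus. ring.
Qed.

Lemma tc_cos t m L : (m <= L)%nat -> poly_eval (tc m) L (cos t) = cos (INR m * t).
Proof. apply (proj1 (tc_cos_aux t m)). Qed.

Lemma tc_le1 m L x : (m <= L)%nat -> -1 <= x <= 1 -> Rabs (poly_eval (tc m) L x) <= 1.
Proof.
  intros H Hx. rewrite <- (cos_acos x Hx). rewrite tc_cos by auto.
  pose proof (COS_bound (INR m * acos x)). apply Rabs_le. lra.
Qed.
Definition seqc (b : nat -> R) (N i : nat) : R := sum_f_R0 (fun m => b m * tc m i) N.
Definition dlt (j m : nat) : R := if Nat.eqb m j then 1 else 0.

Lemma seqc_lin b1 b2 g N i :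
  seqc b1 N i + g * seqc b2 N i = seqc (fun m => b1 m + g * b2 m) N i.
Proof.
  unfold seqc. rewrite scal_sum, <- sum_plus. apply sum_eq. intros; ring.
Qed.

Lemma tc_seqc j N i : (j <= N)%nat -> tc j i = seqc (dlt j) N i.
Proof.
  intros H. unfold seqc. rewrite <- (sum_single (fun m => tc m i) j N H).
  apply sum_eq. intros m _. unfold dlt. destruct (m =? j); ring.
Qed.

Lemma seqc_ext b N : exists b', forall i, seqc b N i = seqc b' (S N) i.
Proof.
  exists (fun m => b m + (- b (S N)) * dlt (S N) m). intros i.
  rewrite <- seqc_lin, <- tc_seqc by lia.
  unfold seqc at 2. cbn [sum_f_R0]. fold (seqc b N i). ring.
Qed.

Lemma shift_ext f g i : (forall j, f j = g j) -> shift f i = shift g i.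
Proof. intros H; destruct i; simpl; auto. Qed.

Lemma shift_tc_S m i : shift (tc (S m)) i = / 2 * tc (S (S m)) i + / 2 * tc m i.
Proof. rewrite tc_SS. field. Qed.

Lemma shift_seqc_S b N i :
  shift (seqc b (S N)) i = shift (seqc b N) i + b (S N) * shift (tc (S N)) i.
Proof. destruct i; simpl; [ring|]. unfold seqc at 1. cbn [sum_f_R0]. reflexivity. Qed.

Lemma seqc_shift N : forall b, exists b', forall i, shift (seqc b N) i = seqc b' (S N) i.
Proof.
  induction N; intros b.
  - exists (fun m => b 0%nat * dlt 1 m). intros i.
    unfold seqc. cbn [sum_f_R0]. unfold dlt. simpl Nat.eqb.
    destruct i as [|i]; simpl.
    + destruct (Nat.eqb_spec 0 0); [|lia]. ring_simplify. simpl. ring.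
    + ring_simplify. destruct i as [|i]; simpl; ring.
  - destruct (IHN b) as [b1 H1]. destruct (seqc_ext b1 (S N)) as [b2 H2].
    exists (fun m => (b2 m + (b (S N) / 2) * dlt (S (S N)) m) + (b (S N) / 2) * dlt N m).
    intros i. rewrite shift_seqc_S, H1, H2, shift_tc_S.
    rewrite <- !seqc_lin, <- !tc_seqc by lia. field.
Qed.

Definition mono (n i : nat) : R := if Nat.eqb i n then 1 else 0.

Lemma mono_seqc n : exists b, forall i, mono n i = seqc b n i.
Proof.
  induction n.
  - exists (fun _ => 1). intros i. unfold seqc, mono. simpl. ring.
  - destruct IHn as [b Hb]. destruct (seqc_shift n b) as [b' Hb'].
    exists b'. intros i. rewrite <- Hb'. rewrite <- (shift_ext (mono n)) by auto.
    destruct i; reflexivity.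
Qed.

Lemma expansion (a : nat -> R) d : exists b, forall n, (n <= d)%nat -> a n = seqc b d n.
Proof.
  induction d.
  - exists (fun _ => a 0%nat). intros n Hn. assert (n = 0%nat) by lia. subst.
    unfold seqc. simpl. ring.
  - destruct IHd as [b Hb]. destruct (seqc_ext b d) as [b1 H1].
    destruct (mono_seqc (S d)) as [be Hbe].
    set (g := a (S d) - seqc b1 (S d) (S d)).
    exists (fun m => b1 m + g * be m). intros n Hn.
    rewrite <- seqc_lin, <- Hbe. unfold mono.
    destruct (Nat.eqb_spec n (S d)).
    + subst. unfold g. ring.
    + rewrite <- H1, <- Hb by lia. ring.
Qed.
Definition hp (c : nat -> R) (L k : nat) (x : R) : R := poly_eval (fun n => c (n + k)%nat) L x.

Lemma pe_split c L k' x :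
  poly_eval c (L + S k') x = poly_eval c k' x + x ^ (S k') * hp c L (S k') x.
Proof.
  induction L.
  - unfold hp, poly_eval. simpl. ring.
  - change (poly_eval c (S (L + S k')) x = poly_eval c k' x + x ^ S k' * hp c (S L) (S k') x).
    unfold poly_eval at 1. cbn [sum_f_R0]. fold (poly_eval c (L + S k') x). rewrite IHL.
    unfold hp, poly_eval. cbn [sum_f_R0].
    replace (S (L + S k')) with (S L + S k')%nat by lia.
    rewrite pow_add. ring.
Qed.

Lemma hp_stable m L L' k x : (m <= L + k)%nat -> (L <= L')%nat -> hp (tc m) L' k x = hp (tc m) L k x.
Proof.
  intros H1 H2. unfold hp, poly_eval. apply sum_ext_zero'; auto.
  intros i Hi. rewrite tc_zero by lia. ring.
Qed.

Lemma abs_bounds x r : Rabs x <= r -> -r <= x <= r.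
Proof. unfold Rabs; destruct (Rcase_abs x); intros; lra. Qed.

Lemma pe_tc_small m k' x : Rabs x <= 1 ->
  Rabs (poly_eval (tc m) k' x) <= INR (S k') * INR (S m) ^ (S k').
Proof.
  intros Hx. unfold poly_eval.
  eapply Rle_trans; [apply sum_f_R0_triangle|].
  rewrite Rmult_comm, <- sum_cte. apply sum_Rle. intros n Hn.
  rewrite Rabs_mult, <- RPow_abs.
  assert (H1 : 1 <= INR (S m)) by (rewrite S_INR; pose proof (pos_INR m); lra).
  assert (A : Rabs x ^ n <= 1) by (rewrite <- (pow1 n); apply pow_incr; split; [apply Rabs_pos|auto]).
  assert (B : INR (S m) ^ n <= INR (S m) ^ S k') by (apply Rle_pow; [auto|lia]).
  pose proof (tc_bound m n). pose proof (Rabs_pos (tc m n)). pose proof (pow_le (Rabs x) n (Rabs_pos x)).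
  nra.
Qed.

Lemma regionA m L k' x : (m <= L + S k')%nat -> / 2 <= Rabs x <= 1 ->
  Rabs (hp (tc m) L (S k') x) <= 2 ^ (S k') * (1 + INR (S k') * INR (S m) ^ (S k')).
Proof.
  intros Hm Hx.
  assert (Hx1 : -1 <= x <= 1) by (apply abs_bounds; lra).
  pose proof (pe_split (tc m) L k' x) as Hs.
  pose proof (tc_le1 m (L + S k') x Hm Hx1) as H1.
  pose proof (pe_tc_small m k' x ltac:(lra)) as H2.
  set (h := hp (tc m) L (S k') x) in *.
  set (B := 1 + INR (S k') * INR (S m) ^ (S k')).
  assert (Hh : Rabs (x ^ S k') * Rabs h <= B).
  { rewrite <- Rabs_mult. replace (x ^ S k' * h) with
      (poly_eval (tc m) (L + S k') x - poly_eval (tc m) k' x) by lra.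
    unfold B. eapply Rle_trans; [apply Rabs_triang|]. rewrite Rabs_Ropp. lra. }
  rewrite <- RPow_abs in Hh.
  assert (Hq : (/2) ^ S k' <= Rabs x ^ S k') by (apply pow_incr; lra).
  assert (Hp : (/2) ^ S k' * 2 ^ S k' = 1) by (rewrite <- Rpow_mult_distr; replace (/2*2) with 1 by field; apply pow1).
  pose proof (Rabs_pos h). pose proof (pow_le (/2) (S k') ltac:(lra)).
  pose proof (pow_le 2 (S k') ltac:(lra)).
  assert (h2 : Rabs h * (/2) ^ S k' <= B) by nra.
  replace (Rabs h) with (Rabs h * (/2) ^ S k' * 2 ^ S k') by (rewrite Rmult_assoc, Hp; ring).
  rewrite (Rmult_comm (2 ^ S k')). apply Rmult_le_compat_r; auto.
Qed.
Lemma hp_shift c L k' x : hp (shift c) (S L) (S k') x = c k' + x * hp c L (S k') x.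
Proof. unfold hp. rewrite pe_S. reflexivity. Qed.

Lemma hp_lin f g L k x : hp (fun n => 2 * f n - g n) L k x = 2 * hp f L k x - hp g L k x.
Proof. unfold hp. apply pe_lin. Qed.

Lemma regionB m L k' x : (m <= L + S k')%nat -> Rabs x <= / 2 ->
  Rabs (hp (tc m) L (S k') x) <= 3 * INR (S m) ^ (S k').
Proof.
  intros Hm Hx.
  set (M := (L + m)%nat).
  set (y := fun j => hp (tc j) (S M) (S k') x).
  assert (Hrec : forall j, (S j <= M)%nat ->
     y (S (S j)) = 2 * x * y (S j) - y j + 2 * tc (S j) k').
  { intros j Hj. unfold y.
    change (hp (tc (S (S j))) (S M) (S k') x) with
      (hp (fun n => 2 * shift (tc (S j)) n - tc j n) (S M) (S k') x).
    rewrite hp_lin, hp_shift.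
    rewrite (hp_stable (S j) M (S M)) by lia. ring. }
  assert (Hy0 : y 0%nat = 0).
  { unfold y, hp, poly_eval. apply sum_zero. intros i _. rewrite tc_zero by lia. ring. }
  assert (Hy1 : Rabs (y 1%nat) <= 1).
  { unfold y. replace (hp (tc 1) (S M) (S k') x) with (hp (shift (tc 0)) (S M) (S k') x)
      by (unfold hp; apply pe_ext; intros; symmetry; apply tc_1).
    rewrite hp_shift.
    assert (Z : hp (tc 0) M (S k') x = 0).
    { unfold hp, poly_eval. apply sum_zero. intros i _. rewrite tc_zero by lia. ring. }
    rewrite Z, Rmult_0_r, Rplus_0_r. pose proof (tc_bound 0 k') as T.
    replace (INR 1) with 1 in T by reflexivity. rewrite pow1 in T. exact T. }
  set (E := fun j => y (S j) ^ 2 - 2 * x * y (S j) * y j + y j ^ 2).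
  assert (Hx' : -(/2) <= x <= /2) by (apply abs_bounds; auto).
  assert (HE : forall j, (j <= M)%nat -> E j <= (2 * INR (S j) ^ (S k')) ^ 2).
  { induction j; intros Hj.
    - unfold E. rewrite Hy0. apply abs_bounds in Hy1. destruct Hy1.
      replace (INR 1) with 1 by reflexivity. rewrite pow1. simpl. clear -H H0. nra.
    - specialize (IHj ltac:(lia)). unfold E in *. rewrite Hrec by lia.
      set (u1 := y (S j)) in *. set (u2 := y j) in *.
      set (f := 2 * tc (S j) k').
      set (B := 2 * INR (S j) ^ S k') in *.
      assert (HB : 0 <= B) by (unfold B; apply Rmult_le_pos; [lra|apply pow_le, pos_INR]).
      assert (Hxx : x * x <= 1) by nra.
      assert (Hxu : x * x * (u1 * u1) <= u1 * u1).
      { pose proof (Rle_0_sqr u1). unfold Rsqr in *. nra. }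
      assert (Ht : (x * u1 - u2) ^ 2 <= B ^ 2) by (simpl in *; nra).
      assert (Ht2 : Rabs (x * u1 - u2) <= B).
      { rewrite <- !Rsqr_pow2 in Ht. apply Rsqr_le_abs_0 in Ht.
        rewrite (Rabs_right B) in Ht by lra. exact Ht. }
      set (a := INR (S j)) in *.
      assert (Ha1 : INR (S (S j)) = a + 1) by (unfold a; rewrite S_INR; ring).
      rewrite Ha1. assert (Ha : 0 <= a) by (unfold a; apply pos_INR).
      assert (Hf : Rabs f <= 2 * (a + 1) ^ k').
      { unfold f. rewrite Rabs_mult, Rabs_right by lra. pose proof (tc_bound (S j) k') as T.
        rewrite Ha1 in T. lra. }
      assert (Hp : a ^ k' <= (a + 1) ^ k') by (apply pow_incr; lra).
      assert (HB' : B + Rabs f <= 2 * (a + 1) ^ S k').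
      { unfold B. simpl. pose proof (pow_le a k' Ha). nra. }
      assert (Hft : f * (x * u1 - u2) <= Rabs f * B).
      { eapply Rle_trans; [apply Rle_abs|]. rewrite Rabs_mult.
        apply Rmult_le_compat_l; [apply Rabs_pos|exact Ht2]. }
      replace ((2 * x * u1 - u2 + f) ^ 2 - 2 * x * (2 * x * u1 - u2 + f) * u1 + u1 ^ 2)
        with ((u1 ^ 2 - 2 * x * u1 * u2 + u2 ^ 2) + 2 * (f * (x * u1 - u2)) + f ^ 2) by ring.
      assert (HfB : 0 <= B + Rabs f) by (pose proof (Rabs_pos f); lra).
      assert (Hsq : (B + Rabs f) ^ 2 <= (2 * (a + 1) ^ S k') ^ 2) by (apply pow_incr; lra).
      assert (Hf2 : f ^ 2 = Rabs f ^ 2) by (symmetry; apply pow2_abs).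
      nra. }
  rewrite <- (hp_stable m L (S M)) by lia. fold (y m).
  specialize (HE m ltac:(lia)). unfold E in HE.
  set (W := INR (S m) ^ S k') in *.
  assert (HW : 0 <= W) by (unfold W; apply pow_le, pos_INR).
  set (v1 := y (S m)) in *. set (v := y m) in *.
  assert (Hv : v ^ 2 <= (3 * W) ^ 2).
  { assert (Hxx : Rabs (2 * x * v1 * v) <= Rabs v1 * Rabs v).
    { rewrite !Rabs_mult. rewrite (Rabs_right 2) by lra.
      pose proof (Rabs_pos v1). pose proof (Rabs_pos v).
      assert (2 * Rabs x <= 1) by lra.
      assert (0 <= Rabs v1 * Rabs v) by (apply Rmult_le_pos; auto). nra. }
    assert (Q1 : v1 ^ 2 = Rabs v1 ^ 2) by (symmetry; apply pow2_abs).
    assert (Q2 : v ^ 2 = Rabs v ^ 2) by (symmetry; apply pow2_abs).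
    pose proof (Rle_abs (2 * x * v1 * v)).
    assert (Rabs v1 ^ 2 - Rabs v1 * Rabs v + Rabs v ^ 2 >= Rabs v ^ 2 / 2).
    { pose proof (Rle_0_sqr (Rabs v1 - Rabs v / 2)). unfold Rsqr in *. nra. }
    nra. }
  rewrite <- !Rsqr_pow2 in Hv. apply Rsqr_le_abs_0 in Hv.
  rewrite (Rabs_right (3 * W)) in Hv by lra. exact Hv.
Qed.
Lemma telescope (g : nat -> R) n : sum_f_R0 (fun j => g (S j) - g j) n = g (S n) - g 0%nat.
Proof. induction n; cbn [sum_f_R0]; [ring|]. rewrite IHn. ring. Qed.

Definition th (d j : nat) : R := (2 * INR j + 1) * PI / (2 * INR (S d)).

Lemma cos_sum_zero d p : (0 < p < 2 * S d)%nat ->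
  sum_f_R0 (fun j => cos (INR p * th d j)) d = 0.
Proof.
  intros Hp. set (N := INR (S d)).
  assert (HN : 0 < N) by (unfold N; apply lt_0_INR; lia).
  set (be := INR p * PI / (2 * N)).
  assert (Hb1 : 0 < be).
  { unfold be. apply Rdiv_lt_0_compat; [|lra]. apply Rmult_lt_0_compat; [apply lt_0_INR; lia|apply PI_RGT_0]. }
  assert (Hb2 : be < PI).
  { unfold be. apply Rmult_lt_reg_r with (2 * N); [lra|].
    field_simplify; [|lra]. pose proof PI_RGT_0.
    assert (INR p < 2 * N). { unfold N. replace 2 with (INR 2) by reflexivity. rewrite <- mult_INR. apply lt_INR. lia. }
    nra. }
  pose proof (sin_gt_0 be Hb1 Hb2) as Hs.
  apply Rmult_eq_reg_l with (2 * sin be); [|lra].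
  rewrite Rmult_0_r, scal_sum.
  rewrite (sum_eq _ (fun j => sin (2 * INR (S j) * be) - sin (2 * INR j * be))).
  - rewrite (telescope (fun j => sin (2 * INR j * be))). simpl (INR 0). rewrite Rmult_0_r, Rmult_0_l, sin_0.
    replace (2 * INR (S d) * be) with (INR p * PI) by (unfold be; change (INR (S d)) with N; field; lra).
    rewrite sin_eq_0_1; [ring|]. exists (Z.of_nat p). rewrite <- INR_IZR_INZ. reflexivity.
  - intros j _. rewrite S_INR.
    replace (2 * (INR j + 1) * be) with ((2 * INR j + 1) * be + be) by ring.
    replace (2 * INR j * be) with ((2 * INR j + 1) * be - be) by ring.
    replace (INR p * th d j) with ((2 * INR j + 1) * be) by (unfold th, be; change (INR (S d)) with N; field; lra).
    rewrite sin_plus, sin_minus. ring.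
Qed.

Lemma sum_one d : sum_f_R0 (fun _ => 1) d = INR (S d).
Proof. rewrite sum_cte. ring. Qed.

Lemma cos_prod a b t : cos (a * t) * cos (b * t) = (cos ((a + b) * t) + cos ((a - b) * t)) / 2.
Proof.
  replace ((a + b) * t) with (a * t + b * t) by ring.
  replace ((a - b) * t) with (a * t - b * t) by ring.
  rewrite cos_plus, cos_minus. field.
Qed.

Definition wt (d m m' : nat) : R :=
  if Nat.eqb m m' then (if Nat.eqb m 0 then INR (S d) else INR (S d) / 2) else 0.

Lemma ortho d m m' : (m <= d)%nat -> (m' <= d)%nat ->
  sum_f_R0 (fun j => cos (INR m * th d j) * cos (INR m' * th d j)) d = wt d m m'.
Proof.
  intros Hm Hm'.
  rewrite (sum_eq _ (fun j => cos (INR (m + m') * th d j) * / 2 + cos (INR (if Nat.leb m' m then m - m' else m' - m) * th d j) * / 2)).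
  2:{ intros j _. rewrite cos_prod, plus_INR. destruct (Nat.leb_spec m' m).
      - rewrite minus_INR by auto. field.
      - rewrite minus_INR by lia. replace ((INR m' - INR m) * th d j) with (- ((INR m - INR m') * th d j)) by ring.
        rewrite cos_neg. field. }
  rewrite sum_plus, <- !scal_sum. unfold wt.
  destruct (Nat.eqb_spec m m') as [<-|Hne].
  - rewrite Nat.leb_refl, Nat.sub_diag.
    rewrite (sum_eq (fun j => cos (INR 0 * th d j)) (fun _ => 1)) by (intros; simpl; rewrite Rmult_0_l; apply cos_0).
    rewrite sum_one. destruct (Nat.eqb_spec m 0) as [->|Hm0].
    + simpl (0+0)%nat. rewrite (sum_eq (fun j => cos (INR 0 * th d j)) (fun _ => 1)) by (intros; simpl; rewrite Rmult_0_l; apply cos_0).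
      rewrite sum_one. field.
    + rewrite cos_sum_zero by lia. field.
  - rewrite cos_sum_zero by lia. rewrite cos_sum_zero.
    + ring.
    + destruct (Nat.leb_spec m' m); lia.
Qed.
Lemma hp_bound m L k' x : (m <= L + S k')%nat -> Rabs x <= 1 ->
  Rabs (hp (tc m) L (S k') x) <= (2 ^ S k' * (1 + INR (S k')) + 3) * INR (S m) ^ S k'.
Proof.
  intros Hm Hx.
  assert (HW : 1 <= INR (S m) ^ S k').
  { rewrite <- (pow1 (S k')). apply pow_incr. rewrite S_INR; pose proof (pos_INR m); lra. }
  assert (H2 : 0 < 2 ^ S k') by (apply pow_lt; lra).
  pose proof (pos_INR (S k')).
  destruct (Rle_lt_dec (Rabs x) (/2)).
  - pose proof (regionB m L k' x Hm r).
    assert (0 <= 2 ^ S k' * (1 + INR (S k')) * INR (S m) ^ S k').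
    { apply Rmult_le_pos; [apply Rmult_le_pos|]; lra. }
    lra.
  - pose proof (regionA m L k' x Hm ltac:(lra)).
    assert (2 ^ S k' * (1 + INR (S k') * INR (S m) ^ S k') <= 2 ^ S k' * ((1 + INR (S k')) * INR (S m) ^ S k')).
    { apply Rmult_le_compat_l; [lra|]. nra. }
    lra.
Qed.

Lemma prod_sums (f g : nat -> R) n m :
  sum_f_R0 f n * sum_f_R0 g m = sum_f_R0 (fun i => sum_f_R0 (fun j => f i * g j) m) n.
Proof.
  transitivity (sum_f_R0 (fun i => f i * sum_f_R0 g m) n).
  - rewrite <- scal_sum. ring.
  - apply sum_eq. intros i _. rewrite scal_sum. apply sum_eq. intros; ring.
Qed.

Lemma pe_expand a b d x : (forall n, (n <= d)%nat -> a n = seqc b d n) ->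
  poly_eval a d x = sum_f_R0 (fun m => b m * poly_eval (tc m) d x) d.
Proof.
  intros H. unfold poly_eval.
  rewrite (sum_eq _ (fun n => sum_f_R0 (fun m => b m * tc m n * x ^ n) d)).
  - rewrite sum_swap. apply sum_eq. intros m _. rewrite scal_sum. apply sum_eq. intros; ring.
  - intros n Hn. rewrite H by auto. unfold seqc. rewrite Rmult_comm, scal_sum.
    apply sum_eq; intros; ring.
Qed.

Lemma hp_expand a b d k x : (forall n, (n <= d)%nat -> a n = seqc b d n) -> (k <= d)%nat ->
  high_part a d k x = sum_f_R0 (fun m => b m * hp (tc m) (d - k) k x) d.
Proof.
  intros H Hk. unfold high_part, hp, poly_eval.
  rewrite (sum_eq _ (fun n => sum_f_R0 (fun m => b m * tc m (n + k)%nat * x ^ n) d)).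
  - rewrite <- sum_swap. apply sum_eq. intros m _. rewrite scal_sum. apply sum_eq. intros; ring.
  - intros n Hn. rewrite H by lia. unfold seqc. rewrite Rmult_comm, scal_sum.
    apply sum_eq; intros; ring.
Qed.

Lemma parseval d b :
  (forall j, (j <= d)%nat ->
     Rabs (sum_f_R0 (fun m => b m * cos (INR m * th d j)) d) <= 1) ->
  sum_f_R0 (fun m => b m ^ 2) d <= 2.
Proof.
  intros H.
  set (N := INR (S d)).
  assert (HN : 0 < N) by (unfold N; apply lt_0_INR; lia).
  assert (S1 : sum_f_R0 (fun j => (sum_f_R0 (fun m => b m * cos (INR m * th d j)) d) ^ 2) d <= N).
  { unfold N. rewrite <- sum_one. apply sum_Rle. intros j Hj.
    specialize (H j Hj). rewrite <- pow2_abs. pose proof (Rabs_pos (sum_f_R0 (fun m => b m * cos (INR m * th d j)) d)).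
    nra. }
  rewrite (sum_eq _ (fun j => sum_f_R0 (fun m => sum_f_R0 (fun m' =>
       b m * b m' * (cos (INR m * th d j) * cos (INR m' * th d j))) d) d)) in S1.
  2:{ intros j _. rewrite <- Rsqr_pow2. unfold Rsqr. rewrite prod_sums.
      apply sum_eq; intros; apply sum_eq; intros; ring. }
  rewrite sum_swap in S1.
  rewrite (sum_eq _ (fun m => b m * b m * wt d m m)) in S1.
  2:{ intros m Hm. rewrite sum_swap.
      rewrite (sum_eq _ (fun m' => if Nat.eqb m' m then b m * b m * wt d m m else 0)).
      - apply (sum_single (fun _ => b m * b m * wt d m m)). auto.
      - intros m' Hm'.
        replace (sum_f_R0 (fun j => b m * b m' * (cos (INR m * th d j) * cos (INR m' * th d j))) d)
          with (b m * b m' * sum_f_R0 (fun j => cos (INR m * th d j) * cos (INR m' * th d j)) d)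
          by (rewrite scal_sum; apply sum_eq; intros; ring).
        rewrite ortho by auto.
        unfold wt. destruct (Nat.eqb_spec m' m) as [->|Hne].
        + rewrite Nat.eqb_refl. ring.
        + destruct (Nat.eqb_spec m m'); [lia|ring]. }
  assert (S2 : sum_f_R0 (fun m => b m ^ 2 * (N / 2)) d <= sum_f_R0 (fun m => b m * b m * wt d m m) d).
  { apply sum_Rle. intros m _. unfold wt. rewrite Nat.eqb_refl.
    assert (0 <= b m * b m) by nra. replace (b m ^ 2) with (b m * b m) by ring.
    destruct (m =? 0); fold N; nra. }
  rewrite <- scal_sum in S2. nra.
Qed.
Theorem mainTheorem5 :
  forall k : nat, (1 <= k)%nat ->
  exists C : R,
    forall (d : nat) (a : nat -> R),
      (k <= d)%nat ->
      sup_norm_le (poly_eval a d) 1 ->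
      sup_norm_le (high_part a d k) (C * INR d ^ k * sqrt (INR d)).
Proof.
  intros k Hk. destruct k as [|k']; [lia|].
  set (K := 2 ^ S k' * (1 + INR (S k')) + 3).
  assert (HK : 0 < K) by (unfold K; pose proof (pow_lt 2 (S k') ltac:(lra)); pose proof (pos_INR (S k')); nra).
  exists (3 * K * 2 ^ S k').
  intros d a Hd HP x Hx.
  destruct (expansion a d) as [b Hb].
  assert (Hpar : sum_f_R0 (fun m => b m ^ 2) d <= 2).
  { apply parseval. intros j Hj.
    rewrite (sum_eq _ (fun m => b m * poly_eval (tc m) d (cos (th d j)))).
    - rewrite <- (pe_expand a b d) by auto. apply HP. apply COS_bound.
    - intros m Hm. rewrite tc_cos by auto. reflexivity. }
  rewrite (hp_expand a b d (S k') x Hb Hd).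
  set (D := INR (S d)).
  assert (HD : 0 < D) by (unfold D; apply lt_0_INR; lia).
  set (W := fun m => K * INR (S m) ^ S k').
  assert (HW : forall m, (m <= d)%nat -> Rabs (hp (tc m) (d - S k') (S k') x) <= W m).
  { intros m Hm. apply hp_bound; [lia|]. apply Rabs_le. lra. }
  set (lam := K * D ^ S k' * sqrt D).
  assert (Hs : 0 < sqrt D) by (apply sqrt_lt_R0; auto).
  assert (Hl : 0 < lam) by (unfold lam; apply Rmult_lt_0_compat; [apply Rmult_lt_0_compat; [auto|apply pow_lt; auto]|auto]).
  eapply Rle_trans; [apply sum_f_R0_triangle|].
  eapply Rle_trans.
  { apply (sum_Rle _ (fun m => b m ^ 2 * (lam / 2) + (W m) ^ 2 * (/ (2 * lam))) d).
    intros m Hm. specialize (HW m Hm). rewrite Rabs_mult.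
    set (h := Rabs (hp (tc m) (d - S k') (S k') x)) in *.
    assert (0 <= h) by apply Rabs_pos.
    assert (Hab : Rabs (b m) * h <= Rabs (b m) * W m) by (apply Rmult_le_compat_l; auto; apply Rabs_pos).
    assert (Hsq : 2 * lam * (Rabs (b m) * W m) <= lam ^ 2 * b m ^ 2 + W m ^ 2).
    { rewrite <- (pow2_abs (b m)). pose proof (Rle_0_sqr (lam * Rabs (b m) - W m)). unfold Rsqr in *. nra. }
    assert (Rabs (b m) * W m <= b m ^ 2 * (lam / 2) + W m ^ 2 * / (2 * lam)).
    { apply Rmult_le_reg_l with (2 * lam); [lra|].
      replace (2 * lam * (b m ^ 2 * (lam / 2) + W m ^ 2 * / (2 * lam))) with (lam ^ 2 * b m ^ 2 + W m ^ 2) by (field; lra).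
      exact Hsq. }
    lra. }
  rewrite sum_plus, <- !scal_sum.
  assert (HWs : sum_f_R0 (fun m => W m ^ 2) d <= K ^ 2 * (D ^ S k') ^ 2 * D).
  { unfold D. rewrite <- sum_cte. apply sum_Rle. intros m Hm. unfold W.
    rewrite Rpow_mult_distr. apply Rmult_le_compat_l; [apply pow_le; lra|].
    apply pow_incr. split; [apply pow_le, pos_INR|]. apply pow_incr. split; [apply pos_INR|]. apply le_INR. lia. }
  assert (Hlam2 : lam ^ 2 = K ^ 2 * (D ^ S k') ^ 2 * D).
  { unfold lam. rewrite !Rpow_mult_distr, pow2_sqrt by lra. ring. }
  assert (Hb1 : lam / 2 * sum_f_R0 (fun m => b m ^ 2) d + / (2 * lam) * sum_f_R0 (fun m => W m ^ 2) d <= 3 / 2 * lam).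
  { assert (lam / 2 * sum_f_R0 (fun m => b m ^ 2) d <= lam) by nra.
    assert (/ (2 * lam) * sum_f_R0 (fun m => W m ^ 2) d <= / (2 * lam) * lam ^ 2).
    { apply Rmult_le_compat_l; [left; apply Rinv_0_lt_compat; lra|]. lra. }
    replace (/ (2 * lam) * lam ^ 2) with (lam / 2) in H0 by (field; lra). lra. }
  eapply Rle_trans; [exact Hb1|].
  assert (Hd1 : 1 <= INR d) by (apply (le_INR 1); lia).
  assert (HDd : D <= 2 * INR d) by (unfold D; rewrite S_INR; lra).
  assert (HDp : D ^ S k' <= 2 ^ S k' * INR d ^ S k').
  { rewrite <- Rpow_mult_distr. apply pow_incr. lra. }
  assert (HsD : sqrt D <= 2 * sqrt (INR d)).
  { replace (2 * sqrt (INR d)) with (sqrt (4 * INR d)).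
    - apply sqrt_le_1; lra.
    - rewrite sqrt_mult_alt by lra. replace 4 with (2 * 2) by ring. rewrite sqrt_square by lra. reflexivity. }
  unfold lam.
  assert (0 <= D ^ S k') by (apply pow_le; lra).
  assert (0 <= sqrt (INR d)) by apply sqrt_pos.
  assert (0 <= INR d ^ S k') by (apply pow_le; lra).
  assert (P : D ^ S k' * sqrt D <= (2 ^ S k' * INR d ^ S k') * (2 * sqrt (INR d))).
  { apply Rmult_le_compat; lra. }
  replace (3 / 2 * (K * D ^ S k' * sqrt D)) with (3 / 2 * K * (D ^ S k' * sqrt D)) by ring.
  replace (3 * K * 2 ^ S k' * INR d ^ S k' * sqrt (INR d)) with (3 / 2 * K * ((2 ^ S k' * INR d ^ S k') * (2 * sqrt (INR d)))) by field.
  apply Rmult_le_compat_l; [lra|exact P].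
Qed.
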